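(* Let $N\ge1$, $Y\ge0$ integers, $K=N+Y-1$, and let $M$ be an integer with $\alpha:=M-K-1>-1$. Let $w(t)=t^\alpha e^{-t}$ on $(0,\infty)$, $\langle p,q\rangle=\int_0^\infty p(t)q(t)w(t)\,dt$, and let $C_{N-1}(t)$ be the monic Laguerre polynomial of degree $N-1$, $C_{N-1}=(-1)^{N-1}(N-1)!\,L^{(\alpha)}_{N-1}$. Define $$D_{N-1}(t)=\Gamma(M)\sum_{j=N-1}^{K}\frac{(-K)_j}{\Gamma(M-K+j)}L^{(\alpha)}_j(t).$$ Then $D_{N-1}$ is a monic polynomial of the form $t^K+\sum_{l=0}^{N-2}a_l t^l$ (i.e. a linear combination of $1,t,\dots,t^{N-2},t^K$ with coefficient $1$ on $t^K$), satisfies $\langle t^l,D_{N-1}\rangle=0$ for $l=0,\dots,N-2$, and $$\langle C_{N-1},D_{N-1}\rangle=(-1)^{N-1}\Gamma(M)\,(-K)_{N-1}.$$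
   Context: $L^{(\alpha)}_j(t)=\sum_{l=0}^j\frac{(-1)^l\Gamma(j+\alpha+1)}{\Gamma(j-l+1)\Gamma(\alpha+l+1)}\frac{t^l}{l!}$ is the generalized Laguerre polynomial; $(a)_j=a(a+1)\cdots(a+j-1)$, $(a)_0=1$. *)

(* Defs.v *)
From mathcomp Require Import all_boot all_order all_algebra.
From mathcomp Require Import all_classical all_reals all_analysis.
Set Implicit Arguments. Unset Strict Implicit. Unset Printing Implicit Defensive.
Import Order.TTheory GRing.Theory Num.Theory.
Local Open Scope ring_scope.
Local Open Scope classical_set_scope.

(* Gamma function at positive integers: Gamma z = (z-1)!  for z >= 1.
   Only used at arguments that are positive integers. *)
Definition GammaZ (R : realType) (z : int) : R := ((`|z|%N).-1)`!%:R.

Definition poch (R : realType) (a : R) (j : nat) : R :=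
  \prod_(i < j) (a + i%:R).

Definition laguerre (R : realType) (alpha : int) (j : nat) : {poly R} :=
  \sum_(l < j.+1)
     ((-1) ^+ l * GammaZ R (j%:Z + alpha + 1)
        / (GammaZ R (j%:Z - l%:Z + 1) * GammaZ R (alpha + l%:Z + 1))
        / (l`!)%:R) *: 'X^l.

Definition lag_inner (R : realType) (alpha : int) (p q : {poly R}) : \bar R :=
  (\int[@lebesgue_measure R]_(t in `]0%R, +oo[)
      (p.[t] * q.[t] * (t ^ alpha) * expR (- t))%:E)%E.

(* Main.v *)
Require Import Defs.
From mathcomp Require Import all_boot all_order all_algebra.
From mathcomp Require Import all_classical all_reals all_analysis.
From mathcomp Require Import measurable_realfun.
From mathcomp Require Import ring lra zify.
Import Order.TTheory GRing.Theory Num.Theory.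
Local Open Scope ring_scope.

Section An.
Import numFieldNormedType.Exports.
Local Open Scope classical_set_scope.
Context {R : realType}.

Lemma invx_cvg0 : (x^-1 : R) @[x --> +oo%R] --> 0%R.
Proof.
apply/(@gtr0_cvgV0 _ _ _ _ (fun x : R => x)).
  by near=> x.
by apply/cvgryPge => A; apply: nbhs_pinfty_ge; exact: num_real.
Unshelve. all: by end_near. Qed.

Lemma monoexp_cvg0 n : (x ^+ n * expR (- x) : R) @[x --> +oo%R] --> 0%R.
Proof.
apply: (@squeeze_cvgr _ _ _ _ (fun _ => 0%R) (fun x : R => n.+1`!%:R * x^-1)).
- near=> x.
  have x0 : (0 < x)%R by near: x; apply: nbhs_pinfty_gt; exact: num_real.
  rewrite mulr_ge0 ?exprn_ge0 ?expR_ge0 ?ltW //=.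
  have := expR_ge1Dxn n (ltW x0).
  idtac.
  move=> h.
  have c0 : (0 < n.+1`!%:R :> R) by rewrite ltr0n fact_gt0.
  have h2 : x ^+ n.+1 < n.+1`!%:R * expR x.
    rewrite -ltr_pdivrMl // mulrC.
    by apply: lt_le_trans h; rewrite ltrDr.
  rewrite expRN -(ltr_pM2r (expR_gt0 x)) -(ltr_pM2r x0).
  rewrite divfK ?gt_eqF ?expR_gt0 // -exprSr.
  by rewrite mulrAC divfK ?gt_eqF // mulrC.
- exact: cvg_cst.
- rewrite -(mulr0 (n.+1`!%:R : R)); apply: cvgMr. exact: invx_cvg0.
Unshelve. all: by end_near. Qed.

Lemma poly_exp_cvg0 (p : {poly R}) : (p.[x] * expR (- x) : R) @[x --> +oo%R] --> 0%R.
Proof.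
have H n : (\sum_(i < n) p`_i * (x ^+ i * expR (- x)) : R) @[x --> +oo%R] --> 0%R.
  elim: n => [|n IH].
    under eq_cvg do rewrite big_ord0. exact: cvg_cst.
  have H' := cvgD IH (@cvgMr _ _ _ _ _ p`_n _ (monoexp_cvg0 n)).
  rewrite mulr0 addr0 in H'.
  rewrite (eq_cvg _ _ (fun x => big_ord_recr n _)).
  exact: H'.
have -> : (fun x : R => p.[x] * expR (- x)) =
    (fun x => \sum_(i < size p) p`_i * (x ^+ i * expR (- x))).
  apply/funext => x; rewrite horner_coef big_distrl /=.
  by apply: eq_bigr => i _; rewrite mulrA.
exact: H.
Unshelve. all: by end_near. Qed.

Fixpoint Pk (k : nat) : {poly R} := if k is k'.+1 then 'X^k + k%:R *: Pk k' else 1.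

Lemma Pk_deriv k : Pk k - (Pk k)^`() = 'X^k.
Proof.
elim: k => [|k IH] /=; first by rewrite derivC subr0 expr0.
rewrite derivD derivZ derivXn /= opprD addrACA -scalerBr IH.
by rewrite scaler_nat addrNK.
Qed.

Lemma Pk0 k : (Pk k).[0] = k`!%:R.
Proof.
elim: k => [|k IH] /=; first by rewrite hornerC.
by rewrite hornerD hornerZ IH hornerXn expr0n /= add0r factS natrM.
Qed.

Lemma is_derive_expN (x : R) : is_derive x 1 (fun y => expR (- y)) (- expR (- x)).
Proof.
have -> : (fun y => expR (- y)) = expR \o -%R by [].
rewrite -(mulrN1 (expR (- x))).
apply: is_derive1_comp.
Qed.

Lemma is_derive_polyexp (q : {poly R}) (x : R) :
  is_derive x 1 (fun y => q.[y] * expR (- y)) ((q^`() - q).[x] * expR (- x)).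
Proof.
have -> : (fun y => q.[y] * expR (- y)) = (horner q * (fun y => expR (- y)))%R by [].
apply: is_derive_eq.
have sE (a b : R) : a *: b = a * b by []. by rewrite !sE hornerD hornerN mulrN1 mulrN mulrDl mulNr addrC mulrC.
Qed.

Lemma polyexp_cont (q : {poly R}) : continuous (fun y => q.[y] * expR (- y)).
Proof.
move=> x; apply/differentiable_continuous/derivable1_diffP.
by case: (is_derive_polyexp q x).
Qed.

Lemma int_monoexp k :
  (\int[lebesgue_measure]_(x in `[0%R, +oo[) (x ^+ k * expR (- x))%:E = ((k`!%:R : R))%:E)%E.
Proof.
pose F (x : R) := - ((Pk k).[x] * expR (- x)).
have dF (x : R) : is_derive x (1:R) F (x ^+ k * expR (- x)).
  rewrite /F; apply: is_derive_eq.
  have sE (a b : R) : a *: b = a * b by [].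
  rewrite -hornerXn -Pk_deriv hornerD hornerN !sE; ring.
have fE : (fun y : R => y ^+ k * expR (- y)) = (fun y => ('X^k).[y] * expR (- y)).
  by apply/funext => y; rewrite hornerXn.
rewrite (@ge0_continuous_FTC2y _ (fun x => x ^+ k * expR (- x)) F 0 0).
- by rewrite /F Pk0 oppr0 expR0 mulr1 EFinN sub0e oppeK.
- by move=> x x0; rewrite mulr_ge0 ?exprn_ge0 ?expR_ge0.
- by apply: continuous_subspaceT; rewrite fE; exact: polyexp_cont.
- rewrite -oppr0; apply: cvgN; exact: poly_exp_cvg0.
- by move=> x _; case: (dF x).
- apply: cvg_at_right_filter; apply: cvgN; exact: polyexp_cont.
- by move=> x _; rewrite derive1E derive_val.
Qed.

Local Notation mu := (@lebesgue_measure R).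

Lemma meas_polyexp (q : {poly R}) (D : set R) :
  measurable_fun D (fun x : R => (q.[x] * expR (- x))%:E).
Proof.
apply/measurable_EFinP/measurable_funTS.
exact: (continuous_measurable_fun (polyexp_cont q)).
Qed.

Lemma monoE k : (fun x : R => (x ^+ k * expR (- x))%:E) =
  (fun x => (('X^k).[x] * expR (- x))%:E).
Proof. by apply/funext => x; rewrite hornerXn. Qed.

Lemma int_monoexp0 k :
  (\int[mu]_(x in `]0%R, +oo[) (x ^+ k * expR (- x))%:E = ((k`!%:R : R))%:E)%E.
Proof.
rewrite integral_itv_obnd_cbnd ?int_monoexp //.
by rewrite monoE; exact: meas_polyexp.
Qed.

Lemma integrable_monoexp k :
  mu.-integrable `]0%R, +oo[ (fun x => (x ^+ k * expR (- x))%:E).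
Proof.
apply/integrableP; split.
  by rewrite monoE; exact: meas_polyexp.
have -> : (\int[mu]_(x in `]0%R, +oo[) `|(x ^+ k * expR (- x))%:E|
   = \int[mu]_(x in `]0%R, +oo[) (x ^+ k * expR (- x))%:E)%E.
  apply: eq_integral => x; rewrite inE /= in_itv /= andbT => x0.
  by rewrite ger0_norm // mulr_ge0 ?exprn_ge0 ?expR_ge0 ?ltW.
move: (int_monoexp0 k) => /= E. match goal with |- context [ (?X < _)%E ] => have -> : X = (k`!%:R)%:E%E by exact: E end. exact: ltry.
Qed.

Lemma int_polyexp (r : {poly R}) :
  (\int[mu]_(x in `]0%R, +oo[) (r.[x] * expR (- x))%:E
     = (\sum_(i < size r) r`_i * i`!%:R)%:E)%E.
Proof.
have iE : forall i : 'I_(size r), mu.-integrable `]0%R, +oo[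
   (fun x => (r`_i * (x ^+ i * expR (- x)))%:E).
  move=> i.
  have -> : (fun x : R => (r`_i * (x ^+ i * expR (- x)))%:E) =
    (fun x => (r`_i)%:E * (x ^+ i * expR (- x))%:E)%E by apply/funext => x; rewrite EFinM.
  exact: integrableZl (integrable_monoexp i).
have -> : (\int[mu]_(x in `]0%R, +oo[) (r.[x] * expR (- x))%:E =
   \int[mu]_(x in `]0%R, +oo[) \sum_(i < size r) (r`_i * (x ^+ i * expR (- x)))%:E)%E.
  apply: eq_integral => x _; rewrite sumEFin horner_coef big_distrl /=; congr EFin.
  by apply: eq_bigr => i _; rewrite mulrA.
rewrite integral_sum //; last first.
rewrite -sumEFin; apply: eq_bigr => i _.
under eq_integral do rewrite EFinM.
by rewrite integralZl ?integrable_monoexp // int_monoexp0 -EFinM.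
Qed.

Lemma integrable_polyexp (r : {poly R}) :
  mu.-integrable `]0%R, +oo[ (fun x => (r.[x] * expR (- x))%:E).
Proof.
have -> : (fun x => (r.[x] * expR (- x))%:E) =
  (fun x => \sum_(i < size r) (r`_i * (x ^+ i * expR (- x)))%:E)%E.
  apply/funext => x; rewrite sumEFin horner_coef big_distrl /=; congr EFin.
  by apply: eq_bigr => i _; rewrite mulrA.
apply: integrable_sum => // i _.
have -> : (fun x : R => (r`_i * (x ^+ i * expR (- x)))%:E) =
    (fun x => (r`_i)%:E * (x ^+ i * expR (- x))%:E)%E by apply/funext => x; rewrite EFinM.
exact: integrableZl (integrable_monoexp i).
Qed.
End An.

Section Alg.
Context {R : realType}.

Definition Phi (r : {poly R}) : R := \sum_(0 <= i < size r) r`_i * (i`!)%:R.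

Lemma PhiE (r : {poly R}) n : (size r <= n)%N -> Phi r = \sum_(0 <= i < n) r`_i * (i`!)%:R.
Proof.
move=> h; rewrite /Phi (big_cat_nat (leq0n _) h) /=.
rewrite [X in _ + X]big1_seq ?addr0 // => i /andP[_].
by rewrite mem_index_iota => /andP[hi _]; rewrite nth_default // mul0r.
Qed.

Lemma PhiD (p q : {poly R}) : Phi (p + q) = Phi p + Phi q.
Proof.
have hp : (size p <= maxn (size p) (size q))%N by rewrite leq_maxl.
have hq : (size q <= maxn (size p) (size q))%N by rewrite leq_maxr.
have hpq : (size (p + q)%R <= maxn (size p) (size q))%N by rewrite size_polyD.
rewrite (PhiE _ _ hp) (PhiE _ _ hq) (PhiE _ _ hpq) -big_split /=.
by apply: eq_bigr => i _; rewrite coefD mulrDl.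
Qed.

Lemma PhiZ (c : R) (p : {poly R}) : Phi (c *: p) = c * Phi p.
Proof.
rewrite (PhiE _ _ (size_scale_leq c p)) /Phi big_distrr /=.
by apply: eq_bigr => i _; rewrite coefZ mulrA.
Qed.

Lemma Phi0 : Phi 0 = 0.
Proof. by rewrite /Phi size_poly0 big_geq. Qed.

Lemma Phi_sum (I : Type) (s : seq I) (P : pred I) (F : I -> {poly R}) :
  Phi (\sum_(i <- s | P i) F i) = \sum_(i <- s | P i) Phi (F i).
Proof. exact: (big_morph Phi PhiD Phi0). Qed.

Lemma PhiXn n : Phi 'X^n = (n`!)%:R.
Proof.
rewrite /Phi size_polyXn big_nat_recr //= coefXn eqxx mul1r big1_seq ?add0r //.
move=> i /andP[_]; rewrite mem_index_iota => /andP[_ hi].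
by rewrite coefXn (ltn_eqF hi) mul0r.
Qed.

Definition lc (a j l : nat) : R :=
  (-1) ^+ l * ((j + a)`!)%:R / (((j - l)`!)%:R * ((a + l)`!)%:R) / (l`!)%:R.

Lemma GammaZ_nat n : GammaZ R (n.+1)%:Z = (n`!)%:R.
Proof. by []. Qed.

Lemma laguerreE a j : laguerre R a%:Z j = \sum_(l < j.+1) lc a j l *: 'X^l.
Proof.
rewrite /laguerre; apply: eq_bigr => [[l hl]] _ /=; congr (_ *: _).
have E1 : (j%:Z + a%:Z + 1 = (j + a).+1%:Z)%R by rewrite -addn1 !PoszD.
have E2 : (j%:Z - l%:Z + 1 = (j - l).+1%:Z)%R by rewrite subzn // -addn1 PoszD.
have E3 : (a%:Z + l%:Z + 1 = (a + l).+1%:Z)%R by rewrite -addn1 !PoszD.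
by rewrite E1 E2 E3 !GammaZ_nat /lc.
Qed.

Lemma Phi_XL a m j : Phi ('X^(m + a) * laguerre R a%:Z j)
  = \sum_(l < j.+1) lc a j l * ((m + a + l)`!)%:R.
Proof.
rewrite laguerreE big_distrr Phi_sum; apply: eq_bigr => l _.
by rewrite /= -scalerAr -exprD PhiZ PhiXn.
Qed.

Lemma fact_neq0 n : ((n`!)%:R : R) != 0.
Proof. by rewrite pnatr_eq0 -lt0n fact_gt0. Qed.

Lemma lc_T a j l m : (l <= j)%N -> lc a j l * ((m + a + l)`!)%:R
  = (-1) ^+ l * ('C(j + a, j - l))%:R * ('C(m + a + l, l))%:R * ((m + a)`!)%:R.
Proof.
move=> hl.
have h1 := bin_fact (leq_trans (leq_subr l j) (leq_addr a j)).
have e1 : (j + a - (j - l) = a + l)%N by lia.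
rewrite e1 in h1.
have h2 := bin_fact (leq_addl (m + a) l).
rewrite addnK in h2.
rewrite /lc -h1 -h2 !natrM.
have := fact_neq0 (j - l); have := fact_neq0 (a + l); have := fact_neq0 l.
have := fact_neq0 (m + a).
move=> n1 n2 n3 n4. field.
by rewrite n2 n3 n4.
Qed.

Definition T (j p q : nat) : R :=
  \sum_(l < j.+1) (-1) ^+ l * ('C(p, j - l))%:R * ('C(q + l, l))%:R.


Lemma T0 p q : T 0 p q = 1.
Proof. by rewrite /T big_ord1 /= !bin0 expr0 !mul1r. Qed.

Lemma Tp0 j q : T j 0 q = (-1) ^+ j * ('C(q + j, j))%:R.
Proof.
rewrite /T big_ord_recr /= subnn bin0 mulr1 big1 ?add0r // => i _ /=.
by rewrite bin0n subn_eq0 leqNgt ltn_ord mulr0 mul0r.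
Qed.

Lemma Trec j p q : T j.+1 p.+1 q = T j.+1 p q + T j p q.
Proof.
rewrite /T big_ord_recr [in X in _ = X + _]big_ord_recr /= subnn !bin0.
rewrite addrAC; congr (_ + _); rewrite -big_split /=.
apply: eq_bigr => i _; rewrite subSn; last by rewrite -ltnS ltn_ord.
by rewrite binS natrD; ring.
Qed.

Lemma Ti p : forall q j, (p <= q)%N -> T j p q = (-1) ^+ j * ('C(q - p + j, j))%:R.
Proof.
elim: p => [|p IH] q j hpq; first by rewrite Tp0 subn0.
case: j => [|j]; first by rewrite T0 expr0 bin0 mul1r.
rewrite Trec !IH; try by apply: ltnW.
have -> : (q - p = (q - p.+1).+1)%N by lia.
set d := (q - p.+1)%N.
rewrite addSn !addnS binS natrD exprS; ring.
Qed.

Lemma Tii e : forall q j, T j (q + 1 + e) q = ('C(e, j))%:R.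
Proof.
elim: e => [|e IH] q j.
  case: j => [|j]; first by rewrite T0 bin0.
  rewrite addn0 addn1 Trec !Ti // subnn !add0n !binn exprS bin0n /=; ring.
case: j => [|j]; first by rewrite T0 bin0.
by rewrite addnS Trec !IH binS natrD.
Qed.

Lemma Phi_XL_T a m j : Phi ('X^(m + a) * laguerre R a%:Z j)
  = ((m + a)`!)%:R * T j (j + a) (m + a).
Proof.
rewrite Phi_XL /T big_distrr; apply: eq_bigr => l _ /=.
rewrite lc_T; last by rewrite -ltnS ltn_ord.
ring.
Qed.

Lemma orth0 a m j : (m < j)%N -> Phi ('X^(m + a) * laguerre R a%:Z j) = 0.
Proof.
move=> hmj; rewrite Phi_XL_T.
have -> : (j + a = m + a + 1 + (j - m - 1))%N by lia.
by rewrite Tii bin_small ?mulr0 //; lia.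
Qed.

Lemma orth1 a j : Phi ('X^(j + a) * laguerre R a%:Z j) = ((j + a)`!)%:R * (-1) ^+ j.
Proof. by rewrite Phi_XL_T Ti // subnn add0n binn mulr1. Qed.

Lemma pochK K n : (n <= K)%N ->
  poch (- (K%:R)) n * (((K - n)`!)%:R : R) = (-1) ^+ n * ((K`!)%:R).
Proof.
elim: n => [|n IH] h; first by rewrite /poch big_ord0 subn0 expr0 !mul1r.
rewrite /poch big_ord_recr /= -/(poch _ _).
have h' : (n <= K)%N by apply: ltnW.
have e : (K - n = (K - n.+1).+1)%N by lia.
move: (IH h'); rewrite e factS natrM => IH'.
transitivity (-1 * ((-1) ^+ n * (K`!)%:R) : R); last by rewrite exprS mulrA.
rewrite -IH'.
have -> : ((K - n.+1).+1%:R : R) = K%:R - n%:R by rewrite -natrB // -e.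
ring.
Qed.

Lemma alt_binom n : \sum_(t < n.+1) (-1) ^+ t * ('C(n, t))%:R = ((n == 0)%N%:R : R).
Proof.
have := exprDn (1 : R) (-1) n; rewrite subrr expr0n => ->.
by apply: eq_bigr => i _; rewrite expr1n mul1r mulr_natr.
Qed.

Lemma coef_core a K i : (i <= K)%N ->
  ((a + K)`!)%:R * \sum_(i <= j < K.+1) poch (- (K%:R)) j / (((a + j)`!)%:R) * lc a j i
  = ((i == K)%N%:R : R).
Proof.
move=> hiK.
rewrite -{1}(add0n i) big_addn.
have e : (K.+1 - i = (K - i).+1)%N by lia.
rewrite e.
have -> : \sum_(0 <= t < (K - i).+1) poch (- (K%:R)) (t + i) / (((a + (t + i))`!)%:R) * lc a (t + i) i
  = ((K`!)%:R / (((K - i)`!)%:R * ((a + i)`!)%:R * (i`!)%:R)) *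
    \sum_(0 <= t < (K - i).+1) (-1) ^+ t * ('C(K - i, t))%:R.
  rewrite big_distrr /=; apply: eq_big_nat => t /andP[_ ht].
  have htK : (t + i <= K)%N by lia.
  have hp := pochK _ _ htK.
  have hb := bin_fact (n := (K - i)%N) (m := t) (ltac:(lia)).
  have e1 : (K - i - t = K - (t + i))%N by lia.
  rewrite e1 in hb.
  have e2 : (t + i - i = t)%N by lia.
  rewrite /lc e2.
  have -> : poch (R:=R) (- (K%:R)) (t + i) = (-1) ^+ (t + i) * (K`!)%:R / (((K - (t + i))`!)%:R).
    by apply: (mulIf (fact_neq0 (K - (t + i)))); rewrite divfK ?fact_neq0 // hp.
  rewrite -hb !natrM exprD (addnC (t + i) a) addnA.
  have := fact_neq0 (K - (t + i)); have := fact_neq0 (a + t + i);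
  have := fact_neq0 (a + i); have := fact_neq0 i; have := fact_neq0 t.
  move=> n1 n2 n3 n4 n5.
  have s2 : ((-1) ^+ i * (-1) ^+ i : R) = 1 by rewrite -exprD addnn -mul2n exprM sqrrN expr1n expr1n.
  have nb : ('C(K - i, t)%:R : R) != 0 by rewrite pnatr_eq0 -lt0n bin_gt0; lia.
  match goal with |- _ = ?X => transitivity ((-1) ^+ i * (-1) ^+ i * X); last by rewrite s2 mul1r end.
  by field; rewrite n1 n2 n3 n4 n5 nb.
rewrite big_mkord alt_binom.
have [->|hne] := eqVneq i K.
  rewrite subnn eqxx /= mulr1.
  have := fact_neq0 (a + K); have := fact_neq0 K; move=> n1 n2.
  by rewrite fact0; field; rewrite n1 n2.
have -> : ((K - i) == 0)%N = false by apply/negbTE; rewrite subn_eq0 -ltnNge ltn_neqAle hne hiK.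
by rewrite !mulr0.
Qed.
End Alg.

Section Link.
Local Open Scope classical_set_scope.
Context {R : realType}.

Lemma lag_innerE (a : nat) (p q : {poly R}) :
  lag_inner a%:Z p q = (Phi (p * q * 'X^a))%:E.
Proof.
rewrite /lag_inner.
have -> : (fun t : R => (p.[t] * q.[t] * (t ^ a%:Z) * expR (- t))%:E) =
  (fun t => ((p * q * 'X^a).[t] * expR (- t))%:E).
  by apply/funext => t; rewrite !hornerM hornerXn -exprnP.
by rewrite int_polyexp /Phi big_mkord.
Qed.

Lemma sum_delta n (F : nat -> R) (i : nat) :
  \sum_(l < n) F l * ((i == (l : nat))%:R) = if (i < n)%N then F i else 0.
Proof.
case: ifP => h.
  rewrite (bigD1 (Ordinal h)) //= eqxx mulr1 big1 ?addr0 // => l hl.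
  have -> : (i == l) = false.
    by apply/negbTE; apply: contra hl => /eqP e; apply/eqP/val_inj => /=; rewrite e.
  by rewrite mulr0.
rewrite big1 // => l _.
have -> : (i == l) = false by apply/negbTE; apply: contraFN h => /eqP ->.
by rewrite mulr0.
Qed.

Lemma coef_lag a j i :
  (laguerre R a%:Z j)`_i = if (i < j.+1)%N then lc a j i else 0.
Proof.
rewrite laguerreE coef_sum.
rewrite -(sum_delta j.+1 (lc a j) i); apply: eq_bigr => l _.
by rewrite coefZ coefXn.
Qed.

Lemma Phi_lin (q : {poly R}) (G : R) (c : nat -> R) (P : nat -> {poly R}) a lo hi :
  Phi (q * (G *: \sum_(lo <= j < hi) c j *: P j) * 'X^a)
  = G * \sum_(lo <= j < hi) c j * Phi (q * 'X^a * P j).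
Proof.
have -> : q * (G *: \sum_(lo <= j < hi) c j *: P j) * 'X^a
   = G *: \sum_(lo <= j < hi) c j *: (q * 'X^a * P j).
  rewrite -scalerAr -scalerAl mulrAC big_distrr /=; congr (_ *: _).
  by apply: eq_bigr => j _; rewrite scalerAr.
rewrite PhiZ Phi_sum; congr (_ * _); apply: eq_bigr => j _.
by rewrite PhiZ.
Qed.

End Link.

Theorem mainTheorem6 (R : realType) (N Y : nat) (M : int) :
  (1 <= N)%N ->
  let K := (N + Y - 1)%N in
  let alpha : int := M - K%:Z - 1 in
  -1 < alpha ->
  let C : {poly R} := ((-1) ^+ (N - 1) * ((N - 1)`!)%:R) *: laguerre R alpha (N - 1) in
  let D : {poly R} := GammaZ R M *:
      \sum_(N - 1 <= j < K.+1)
         (poch (- K%:R) j / GammaZ R (M - K%:Z + j%:Z)) *: laguerre R alpha j in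
  (exists a : nat -> R, D = 'X^K + \sum_(l < N - 1) a l *: 'X^l)
  /\ (forall l : nat, (l < N - 1)%N -> lag_inner alpha 'X^l D = 0%E)
  /\ lag_inner alpha C D
       = ((-1) ^+ (N - 1) * GammaZ R M * poch (- K%:R) (N - 1))%:E.
Proof.
move=> hN K alpha halpha C D; rewrite /C /D; clear C D.
have [a ha] : exists a : nat, alpha = a%:Z.
  exists `|alpha|%N; rewrite gez0_abs //; lia.
have hM : M = (a + K).+1%:Z by move: ha; rewrite /alpha; lia.
have hG : GammaZ R M = ((a + K)`!)%:R by rewrite hM.
have hGj j : GammaZ R (M - K%:Z + j%:Z) = ((a + j)`!)%:R.
  by have -> : (M - K%:Z + j%:Z = (a + j).+1%:Z)%R by rewrite hM; lia.
rewrite ha hG.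
under eq_bigr => j _ do rewrite hGj.
set n := (N - 1)%N.
have hKn : (n <= K)%N by rewrite /n /K; lia.
set G := ((a + K)`!)%:R : R.
set DD := (G *: _).
split; [|split].
- exists (fun l => DD`_l).
  apply/polyP => i.
  rewrite coefD coefXn coef_sum.
  under eq_bigr => l _ do rewrite coefZ coefXn.
  rewrite sum_delta.
  case: (ltnP i n) => hi.
    have -> : (i == K) = false by apply/negbTE; rewrite neq_ltn (leq_trans hi hKn).
    by rewrite add0r.
  rewrite addr0 /DD coefZ coef_sum.
  under eq_bigr => j _ do rewrite coefZ coef_lag.
  case: (leqP i K) => hiK.
    rewrite (big_cat_nat hi (leq_trans hiK (leqnSn K))) /=.
    rewrite big1_seq ?add0r; last first.
      move=> j /andP[_]; rewrite mem_index_iota => /andP[_ hj].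
      by rewrite ltnS leqNgt hj /= mulr0.
    rewrite -(coef_core a K i hiK); congr (_ * _).
    apply: eq_big_nat => j /andP[hj _].
    by rewrite ltnS hj.
  rewrite big1_seq ?mulr0; last first.
    move=> j /andP[_]; rewrite mem_index_iota => /andP[_ hj].
    by rewrite ltnNge (leq_trans hj hiK) /= mulr0.
  by rewrite (_ : (i == K) = false) // gtn_eqF.
- move=> l hl; rewrite lag_innerE /DD Phi_lin big1_seq ?mulr0 // => j /andP[_].
  rewrite mem_index_iota => /andP[hj _].
  by rewrite -exprD orth0 ?mulr0 //; apply: leq_trans hl hj.
rewrite lag_innerE -mulrA laguerreE -scalerAl big_distrl /= PhiZ Phi_sum.
congr EFin.
under eq_bigr => m _ do rewrite -scalerAl PhiZ mulrA /DD Phi_lin.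
rewrite big_ord_recr /= big1 ?add0r; last first.
  move=> m _; rewrite big1_seq ?mulr0 //.
  move=> j /andP[_]; rewrite mem_index_iota => /andP[hj _].
  by rewrite -exprD orth0 ?mulr0 //; apply: leq_trans (ltn_ord m) hj.
rewrite big_ltn; last by rewrite ltnS.
rewrite big1_seq ?addr0; last first.
  move=> j /andP[_]; rewrite mem_index_iota => /andP[hj _].
  by rewrite -exprD orth0 ?mulr0.
rewrite -exprD orth1 /lc subnn fact0 (addnC n a).
have := fact_neq0 (R:=R) (a + n); have := fact_neq0 (R:=R) n => n1 n2.
have s2 : ((-1) ^+ n * (-1) ^+ n : R) = 1 by rewrite -exprD addnn -mul2n exprM sqrrN expr1n expr1n.
match goal with |- _ = ?X => transitivity ((-1) ^+ n * (-1) ^+ n * X); last by rewrite s2 mul1r end.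
by field; rewrite n1 n2.
Qed.
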